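(* Let $R$ be a commutative ring with identity. Then $R$ is semi-complemented if and only if its classical ring of quotients $q(R)$ is semi-complemented.
   Context: $\mathfrak{N}(R)$ is the nilradical and $\mathrm{reg}(R)$ the set of regular elements (non-zero-divisors); $q(R)$ is the localization of $R$ at $\mathrm{reg}(R)$. An element $a$ is complemented if there is $b$ with $ab=0$ and $a+b\in\mathrm{reg}(R)$. $R$ is semi-complemented if every element of $R\setminus\mathfrak{N}(R)$ is complemented. *)

(* Defs.v *)
From mathcomp Require Import all_boot all_algebra.
Set Implicit Arguments. Unset Strict Implicit. Unset Printing Implicit Defensive.
Import GRing.Theory.
Local Open Scope ring_scope.

Definition in_nilradical (R : comPzRingType) (a : R) : Prop :=
  exists n : nat, a ^+ n = 0.

Definition regular (R : comPzRingType) (a : R) : Prop :=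
  forall b : R, a * b = 0 -> b = 0.

Definition complemented (R : comPzRingType) (a : R) : Prop :=
  exists b : R, a * b = 0 /\ regular (a + b).

Definition semi_complemented (R : comPzRingType) : Prop :=
  forall a : R, ~ in_nilradical a -> complemented a.

(* f : R -> Q presents Q as the classical ring of quotients q(R) = R[reg(R)^-1]
   (standard characterization of the localization at S = reg(R):
   f(S) consists of units, ker f = {a | sa = 0 for some s in S} = 0,
   and every element of Q is of the form f(a) f(s)^-1 with s in S). *)
Definition is_classical_quotient (R Q : comPzRingType) (f : {rmorphism R -> Q}) : Prop :=
  [/\ injective f,
      (forall s : R, regular s -> exists t : Q, f s * t = 1) &
      (forall q : Q, exists a s : R, regular s /\ q * f s = f a)].

(* Main.v *)
Require Import Defs.
From mathcomp Require Import all_boot all_algebra.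
Set Implicit Arguments. Unset Strict Implicit. Unset Printing Implicit Defensive.
Import GRing.Theory.
Local Open Scope ring_scope.

Section Aux.
Variables (R Q : comPzRingType) (f : {rmorphism R -> Q}).
Hypothesis finj : injective f.
Hypothesis funit : forall s : R, regular s -> exists t : Q, f s * t = 1.
Hypothesis frep : forall q : Q, exists a s : R, regular s /\ q * f s = f a.

Lemma fker x : f x = 0 -> x = 0.
Proof. by move=> h; apply: finj; rewrite h rmorph0. Qed.

Lemma reg_to (a : R) : regular a -> regular (f a).
Proof.
move=> ra q h; have [c [s [rs hc]]] := frep q.
have [t ht] := funit rs.
have ac : a * c = 0.
  apply: fker; rewrite rmorphM -hc mulrA h mul0r //.
have c0 := ra _ ac.
by rewrite -[q]mulr1 -ht mulrA hc c0 rmorph0 mul0r.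
Qed.

Lemma reg_from (a : R) : regular (f a) -> regular a.
Proof.
move=> ra b h; apply: fker; apply: ra; by rewrite -rmorphM h rmorph0.
Qed.

Lemma nil_to (a : R) : in_nilradical a -> in_nilradical (f a).
Proof. by move=> [n hn]; exists n; rewrite -rmorphXn hn rmorph0. Qed.

Lemma nil_from (a : R) : in_nilradical (f a) -> in_nilradical a.
Proof. by move=> [n hn]; exists n; apply: fker; rewrite rmorphXn. Qed.
End Aux.

Theorem mainTheorem5 (R Q : comPzRingType) (f : {rmorphism R -> Q}) :
  is_classical_quotient f -> (semi_complemented R <-> semi_complemented Q).
Proof.
move=> [finj funit frep]; split.
- move=> scR q nq.
  have [a [s [rs hq]]] := frep q.
  have [t ht] := funit _ rs.
  have qE : q = f a * t by rewrite -hq -mulrA ht mulr1.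
  have na : ~ in_nilradical a.
    move=> [n hn]; apply: nq; exists n.
    by rewrite qE exprMn -rmorphXn hn rmorph0 mul0r.
  have [b [hab rb]] := scR a na.
  exists (f b * t); split.
    by rewrite qE mulrACA -rmorphM hab rmorph0 mul0r.
  move=> x; rewrite qE -mulrDl -rmorphD -mulrA => h.
  have := reg_to finj funit frep rb h => h2.
  by rewrite -[x]mul1r -ht -mulrA h2 mulr0.
- move=> scQ a na.
  have nfa : ~ in_nilradical (f a) by move/(nil_from finj).
  have [q [hq rq]] := scQ _ nfa.
  have [c [s [rs hc]]] := frep q.
  have ac : a * c = 0.
    by apply: (fker finj); rewrite rmorphM -hc mulrA hq mul0r.
  have rsc : regular (a * s + c).
    apply: (reg_from finj); rewrite rmorphD rmorphM -hc -mulrDl => x h.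
    apply: rq; apply: (reg_to finj funit frep rs).
    by rewrite mulrC -mulrA [x * _]mulrC mulrA h.
  exists c; split => // x h.
  have a2 : a * (a * x) = 0.
    have : a * ((a + c) * x) = 0 by rewrite h mulr0.
    by rewrite mulrDl mulrDr [a * (c * x)]mulrA ac mul0r addr0.
  have ax : a * x = 0.
    apply: rsc; rewrite mulrDl -mulrA mulrCA a2 mulr0 add0r.
    by rewrite [c * (a * x)]mulrA [c * a]mulrC ac mul0r.
  have cx : c * x = 0 by move: h; rewrite mulrDl ax add0r.
  by apply: rsc; rewrite mulrDl -mulrA [s * x]mulrC mulrA ax mul0r add0r cx.
Qed.
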